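(* Let $n\ge2$, let $A\in\mathbb{R}^{n\times n}$ be symmetric with zero diagonal, $\theta\in\mathbb{R}^n$, $\lambda>0$, and $p_1,\dots,p_n\in[0,1)$ with $p_{\max}=\max_ip_i$. Then for every fixed $w\in\mathbb{R}^{2n+1}$, $\mathbb{E}_{X\sim\mathcal{D}_{\mathsf{miss}}}[\underline G(w;X)]=\nabla\widetilde{\underline S}(w)$, and for all $X\in\{-1,0,1\}^n$ and $w\in\Delta(\lambda,2n+1)$, $\|\underline G(w;X)\|_\infty\le\frac{1}{(1-p_{\max})^2}\exp\big(\frac{\lambda}{1-p_{\max}}\big)$.
   Context: Ising model $\mathcal{D}(A,\theta)$ on $\{-1,1\}^n$: $\Pr[Z=z]\propto\exp\big(\sum_{i<j}A_{ij}z_iz_j+\sum_i\theta_iz_i\big)$. Missing-data distribution $\mathcal{D}_{\mathsf{miss}}$: draw $Z\sim\mathcal{D}(A,\theta)$ and independent $C_1,\dots,C_n\in\{0,1\}$ with $\Pr[C_i=1]=1-p_i$; output $X$ with $X_i=C_iZ_i$. $\Delta(W,k)=\{x\in\mathbb{R}^k:x\ge0,\sum_ix_i=W\}$. For $w\in\mathbb{R}^{2n+1}$ put $v_j=w_j-w_{n+j}$ for $j\in[n]$ and $\widetilde{\underline S}(w)=\mathbb{E}_{Z\sim\mathcal{D}(A,\theta)}\big[\exp\big(-\sum_{j=1}^{n-1}v_jZ_nZ_j-v_nZ_n\big)\big]$. Estimator: for $X\in\{-1,0,1\}^n$ and $i\in[n-1]$, $$\underline g^i(w;X)=-\frac{\exp(-v_nX_n)X_n}{1-p_n}\cdot\frac{\exp(-v_iX_nX_i)X_i}{1-p_i}\cdot\prod_{j\in[n-1],j\ne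 i}\frac{\exp(-v_jX_nX_j)-p_j}{1-p_j},\qquad \underline g^n(w;X)=-\frac{\exp(-v_nX_n)X_n}{1-p_n}\prod_{j\in[n-1]}\frac{\exp(-v_jX_nX_j)-p_j}{1-p_j},$$ and $\underline G(w;X)=\sum_{i=1}^{n}\underline g^i(w;X)(e^i-e^{n+i})\in\mathbb{R}^{2n+1}$, with $e^i$ the standard basis vectors of $\mathbb{R}^{2n+1}$. *)

(* Defs.v *)
From Stdlib Require Import Reals List Arith Bool.
Import ListNotations.
Open Scope R_scope.

(* Vectors are functions nat -> R, with 1-based meaningful coordinates
   (1..n for configurations, 1..2n+1 for parameters w). *)

Definition lsum {T : Type} (f : T -> R) (l : list T) : R :=
  fold_right (fun x acc => f x + acc) 0 l.
Definition lprod {T : Type} (f : T -> R) (l : list T) : R :=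
  fold_right (fun x acc => f x * acc) 1 l.

Definition idx (n : nat) : list nat := seq 1 n.

Definition upd (z : nat -> R) (k : nat) (a : R) : nat -> R :=
  fun m => if Nat.eqb m k then a else z m.

Fixpoint all_vecs (vals : list R) (k : nat) : list (nat -> R) :=
  match k with
  | O => [fun _ => 0]
  | S k' => flat_map (fun z => map (fun a => upd z (S k') a) vals) (all_vecs vals k')
  end.

Definition cube (n : nat) : list (nat -> R) := all_vecs [1; -1] n.
Definition bits (n : nat) : list (nat -> R) := all_vecs [1; 0] n.

Definition ising_H (n : nat) (A : nat -> nat -> R) (theta : nat -> R) (z : nat -> R) : R :=
  lsum (fun j => lsum (fun i => A i j * z i * z j) (seq 1 (j - 1))) (idx n)
  + lsum (fun i => theta i * z i) (idx n).

Definition ising_Z (n : nat) A theta : R :=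
  lsum (fun z => exp (ising_H n A theta z)) (cube n).

Definition ising_pr (n : nat) A theta (z : nat -> R) : R :=
  exp (ising_H n A theta z) / ising_Z n A theta.

Definition ising_E (n : nat) A theta (f : (nat -> R) -> R) : R :=
  lsum (fun z => ising_pr n A theta z * f z) (cube n).

Definition mask_pr (n : nat) (p : nat -> R) (c : nat -> R) : R :=
  lprod (fun i => if Req_EM_T (c i) 1 then 1 - p i else p i) (idx n).

(* E_{X ~ D_miss}[f X], where X_i = C_i Z_i *)
Definition miss_E (n : nat) A theta (p : nat -> R) (f : (nat -> R) -> R) : R :=
  lsum (fun z => lsum (fun c =>
      ising_pr n A theta z * mask_pr n p c * f (fun i => c i * z i)) (bits n)) (cube n).

Definition vv (n : nat) (w : nat -> R) (j : nat) : R := w j - w (n + j)%nat.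

Definition Stilde (n : nat) A theta (w : nat -> R) : R :=
  ising_E n A theta (fun z =>
    exp (- lsum (fun j => vv n w j * z n * z j) (idx (n - 1)) - vv n w n * z n)).

Definition g_under (n : nat) (p : nat -> R) (w : nat -> R) (X : nat -> R) (i : nat) : R :=
  if Nat.eqb i n then
    - (exp (- vv n w n * X n) * X n / (1 - p n))
      * lprod (fun j => (exp (- vv n w j * X n * X j) - p j) / (1 - p j)) (idx (n - 1))
  else
    - (exp (- vv n w n * X n) * X n / (1 - p n))
      * (exp (- vv n w i * X n * X i) * X i / (1 - p i))
      * lprod (fun j => if Nat.eqb j i then 1
                        else (exp (- vv n w j * X n * X j) - p j) / (1 - p j))
              (idx (n - 1)).

(* G(w;X) = sum_i g^i (e^i - e^{n+i}) in R^{2n+1}; coordinate k (1-based) *)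
Definition G_under (n : nat) (p : nat -> R) (w : nat -> R) (X : nat -> R) (k : nat) : R :=
  if (1 <=? k) && (k <=? n) then g_under n p w X k
  else if (n + 1 <=? k) && (k <=? 2 * n) then - g_under n p w X (k - n)
  else 0.

Definition shift (w : nat -> R) (k : nat) (t : R) : nat -> R :=
  fun m => if Nat.eqb m k then w m + t else w m.

(* p_max = max_i p_i (p_i >= 0, so starting the fold at 0 is harmless) *)
Definition pmax (n : nat) (p : nat -> R) : R := fold_right Rmax 0 (map p (idx n)).

(* Main.v *)
Require Import Defs.
From Stdlib Require Import Reals List Arith.
From Stdlib Require Import Lra Lia FunctionalExtensionality.
Import ListNotations.
Open Scope R_scope.


Section L.
Context {T : Type}.
Lemma lsum_app (f : T -> R) l1 l2 : lsum f (l1 ++ l2) = lsum f l1 + lsum f l2.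
Proof. induction l1; simpl; [ring| unfold lsum in *; simpl; rewrite IHl1; ring]. Qed.
Lemma lprod_app (f : T -> R) l1 l2 : lprod f (l1 ++ l2) = lprod f l1 * lprod f l2.
Proof. induction l1; simpl; [ring| unfold lprod in *; simpl; rewrite IHl1; ring]. Qed.
Lemma lsum_cons (f : T -> R) a l : lsum f (a :: l) = f a + lsum f l.
Proof. reflexivity. Qed.
Lemma lprod_cons (f : T -> R) a l : lprod f (a :: l) = f a * lprod f l.
Proof. reflexivity. Qed.
Lemma lsum_nil (f : T -> R) : lsum f [] = 0. Proof. reflexivity. Qed.
Lemma lprod_nil (f : T -> R) : lprod f [] = 1. Proof. reflexivity. Qed.
Lemma lsum_ext_in (f g : T -> R) l : (forall x, In x l -> f x = g x) -> lsum f l = lsum g l.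
Proof. induction l; intros H; [reflexivity|]. rewrite !lsum_cons; f_equal; [apply H; left; auto| apply IHl; intros; apply H; right; auto]. Qed.
Lemma lprod_ext_in (f g : T -> R) l : (forall x, In x l -> f x = g x) -> lprod f l = lprod g l.
Proof. induction l; intros H; [reflexivity|]. rewrite !lprod_cons; f_equal; [apply H; left; auto| apply IHl; intros; apply H; right; auto]. Qed.
Lemma lsum_scal (a : R) (f : T -> R) l : lsum (fun x => a * f x) l = a * lsum f l.
Proof. induction l; [simpl; ring|]. rewrite !lsum_cons, IHl; ring. Qed.
Lemma lsum_scalr (a : R) (f : T -> R) l : lsum (fun x => f x * a) l = lsum f l * a.
Proof. induction l; [simpl; ring|]. rewrite !lsum_cons, IHl; ring. Qed.
Lemma lsum_plus (f g : T -> R) l : lsum (fun x => f x + g x) l = lsum f l + lsum g l.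
Proof. induction l; [simpl; ring|]. rewrite !lsum_cons, IHl; ring. Qed.
Lemma lsum_zero (f : T -> R) l : (forall x, In x l -> f x = 0) -> lsum f l = 0.
Proof. induction l; intros H; [reflexivity|]. rewrite lsum_cons, H, IHl; [ring| intros; apply H; right; auto |left;auto]. Qed.
Lemma lprod_mult (f g : T -> R) l : lprod (fun x => f x * g x) l = lprod f l * lprod g l.
Proof. induction l; [simpl; ring|]. rewrite !lprod_cons, IHl; ring. Qed.
Lemma lsum_le (f g : T -> R) l : (forall x, In x l -> f x <= g x) -> lsum f l <= lsum g l.
Proof. induction l; intros H; [simpl; lra|]. rewrite !lsum_cons. apply Rplus_le_compat; [apply H; left; auto| apply IHl; intros; apply H; right; auto]. Qed.
Lemma lprod_abs_le (f g : T -> R) l : (forall x, In x l -> Rabs (f x) <= g x) -> Rabs (lprod f l) <= lprod g l.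
Proof. induction l; intros H. simpl; rewrite Rabs_R1; lra.
 rewrite !lprod_cons, Rabs_mult. assert (H1 := H a (or_introl eq_refl)).
 assert (H2 : Rabs (lprod f l) <= lprod g l) by (apply IHl; intros; apply H; right; auto).
 apply Rmult_le_compat; auto using Rabs_pos. Qed.
End L.
Lemma lsum_flat_map {T U : Type} (f : U -> R) (g : T -> list U) l :
  lsum f (flat_map g l) = lsum (fun x => lsum f (g x)) l.
Proof. induction l; [reflexivity|]. change (flat_map g (a :: l)) with (g a ++ flat_map g l). rewrite lsum_app, lsum_cons, IHl; reflexivity. Qed.
Lemma lsum_map {T U : Type} (f : U -> R) (g : T -> U) l : lsum f (map g l) = lsum (fun x => f (g x)) l.
Proof. induction l; [reflexivity|]. simpl map. rewrite !lsum_cons, IHl; reflexivity. Qed.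


Lemma lprod_exp (f : nat -> R) l : lprod (fun j => exp (f j)) l = exp (lsum f l).
Proof. induction l; [simpl; rewrite exp_0; reflexivity|]. rewrite lprod_cons, lsum_cons, IHl, exp_plus; reflexivity. Qed.

Lemma lsum_pick (i : nat) (a : nat -> R) l : NoDup l -> In i l ->
  lsum (fun j => if j =? i then a j else 0) l = a i.
Proof. induction l as [|x l IH]; intros Hd Hi; [inversion Hi|]. inversion Hd; subst.
 rewrite lsum_cons. destruct Hi as [->|Hi].
 - rewrite Nat.eqb_refl, lsum_zero; [ring|]. intros y Hy. destruct (Nat.eqb_spec y i); subst; [contradiction|reflexivity].
 - rewrite IH; auto. destruct (Nat.eqb_spec x i); subst; [contradiction|ring]. Qed.

Lemma lprod_pick (i : nat) (a b : nat -> R) l : NoDup l -> In i l ->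
  lprod (fun j => if j =? i then a j else b j) l = a i * lprod (fun j => if j =? i then 1 else b j) l.
Proof. induction l as [|x l IH]; intros Hd Hi; [inversion Hi|]. inversion Hd; subst.
 rewrite !lprod_cons. destruct Hi as [->|Hi].
 - rewrite Nat.eqb_refl. rewrite (lprod_ext_in _ (fun j => if j =? i then 1 else b j)). ring.
   intros y Hy. destruct (Nat.eqb_spec y i); subst; [contradiction|reflexivity].
 - rewrite IH; auto. destruct (Nat.eqb_spec x i); subst; [contradiction|ring]. Qed.

Lemma lprod_if_notin (k : nat) (a b : nat -> R) l : (forall j, In j l -> j <> k) ->
  lprod (fun j => if j =? k then a j else b j) l = lprod b l.
Proof. intros H; apply lprod_ext_in; intros j Hj. destruct (Nat.eqb_spec j k); [exfalso; eapply H; eauto|reflexivity]. Qed.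

Lemma seq_last (m : nat) : seq 1 (S m) = seq 1 m ++ [S m].
Proof. rewrite seq_S. reflexivity. Qed.

Lemma lprod_single (f : nat -> R) x : lprod f [x] = f x.
Proof. unfold lprod; simpl; ring. Qed.
Lemma lsum_single (f : nat -> R) x : lsum f [x] = f x.
Proof. unfold lsum; simpl; ring. Qed.

Lemma upd_ne c k a j : j <> k -> upd c k a j = c j.
Proof. intros H; unfold upd; destruct (Nat.eqb_spec j k); [contradiction|reflexivity]. Qed.
Lemma upd_eq c k a : upd c k a k = a.
Proof. unfold upd; rewrite Nat.eqb_refl; reflexivity. Qed.

Lemma all_vecs_in vals k c : In c (all_vecs vals k) -> forall i, (1 <= i <= k)%nat -> In (c i) vals.
Proof. revert c; induction k; intros c Hc i Hi; [lia|]. simpl in Hc.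
 apply in_flat_map in Hc as [c0 [Hc0 Hc]]. apply in_map_iff in Hc as [a [<- Ha]].
 destruct (Nat.eq_dec i (S k)) as [->|Hne]. rewrite upd_eq; auto.
 rewrite upd_ne; auto. apply IHk; auto; lia. Qed.

Lemma factor_lemma (vals : list R) (f : nat -> R -> R) k :
  lsum (fun c => lprod (fun i => f i (c i)) (seq 1 k)) (all_vecs vals k) =
  lprod (fun i => lsum (f i) vals) (seq 1 k).
Proof. induction k. simpl. unfold lsum, lprod; simpl; ring.
 simpl all_vecs. rewrite lsum_flat_map.
 rewrite (lsum_ext_in _ (fun c => lprod (fun i => f i (c i)) (seq 1 k) * lsum (f (S k)) vals)).
 - rewrite lsum_scalr, IHk, seq_last, lprod_app, lprod_single. reflexivity.
 - intros c _. rewrite lsum_map. rewrite <- lsum_scal. apply lsum_ext_in; intros a _.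
   rewrite seq_last, lprod_app, lprod_single, upd_eq. f_equal. apply lprod_ext_in.
   intros j Hj. apply in_seq in Hj. rewrite upd_ne; [reflexivity|lia]. Qed.

Lemma factor_P (vals : list R) (f : nat -> R -> R) k (P : (nat -> R) -> R) :
  (forall c, In c (all_vecs vals k) -> P c = lprod (fun i => f i (c i)) (seq 1 k)) ->
  lsum P (all_vecs vals k) = lprod (fun i => lsum (f i) vals) (seq 1 k).
Proof. intros H; rewrite <- factor_lemma; apply lsum_ext_in; auto. Qed.

Lemma Req1 (a b : R) : (if Req_EM_T 1 1 then a else b) = a.
Proof. destruct (Req_EM_T 1 1); [reflexivity|lra]. Qed.
Lemma Req0 (a b : R) : (if Req_EM_T 0 1 then a else b) = b.
Proof. destruct (Req_EM_T 0 1); [lra|reflexivity]. Qed.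


Lemma dpl_eq f x l l' : l = l' -> derivable_pt_lim f x l -> derivable_pt_lim f x l'.
Proof. intros ->; auto. Qed.
Lemma dpl_ext f g x l : (forall t, f t = g t) -> derivable_pt_lim f x l -> derivable_pt_lim g x l.
Proof. intros H; replace g with f; auto. apply functional_extensionality; auto. Qed.
Lemma dpl_const c x : derivable_pt_lim (fun _ => c) x 0.
Proof. apply (derivable_pt_lim_const c x). Qed.
Lemma dpl_affine a b x : derivable_pt_lim (fun t => a + b * t) x b.
Proof. eapply dpl_eq; [|apply (derivable_pt_lim_plus (fct_cte a) (mult_real_fct b id))].
 2: apply derivable_pt_lim_const. 2: apply derivable_pt_lim_scal, derivable_pt_lim_id. ring. Qed.
Lemma dpl_plus f g x a b : derivable_pt_lim f x a -> derivable_pt_lim g x b -> derivable_pt_lim (fun t => f t + g t) x (a + b).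
Proof. intros; apply (derivable_pt_lim_plus f g); auto. Qed.
Lemma dpl_minus f g x a b : derivable_pt_lim f x a -> derivable_pt_lim g x b -> derivable_pt_lim (fun t => f t - g t) x (a - b).
Proof. intros; apply (derivable_pt_lim_minus f g); auto. Qed.
Lemma dpl_opp f x a : derivable_pt_lim f x a -> derivable_pt_lim (fun t => - f t) x (- a).
Proof. intros; apply (derivable_pt_lim_opp f); auto. Qed.
Lemma dpl_mulr f x a c : derivable_pt_lim f x a -> derivable_pt_lim (fun t => f t * c) x (a * c).
Proof. intros H. eapply dpl_eq; [|apply (derivable_pt_lim_mult f (fct_cte c)); [exact H| apply derivable_pt_lim_const]].
 unfold fct_cte; ring. Qed.
Lemma dpl_mull f x a c : derivable_pt_lim f x a -> derivable_pt_lim (fun t => c * f t) x (c * a).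
Proof. intros H. eapply dpl_eq; [|apply (derivable_pt_lim_mult (fct_cte c) f); [apply derivable_pt_lim_const| exact H]].
 unfold fct_cte; ring. Qed.
Lemma dpl_exp u x l : derivable_pt_lim u x l -> derivable_pt_lim (fun t => exp (u t)) x (l * exp (u x)).
Proof. intros H. eapply dpl_eq; [|apply (derivable_pt_lim_comp u exp); [exact H| apply derivable_pt_lim_exp]]. ring. Qed.
Lemma dpl_lsum {T : Type} (F : T -> R -> R) (dF : T -> R) l x :
  (forall j, In j l -> derivable_pt_lim (F j) x (dF j)) ->
  derivable_pt_lim (fun t => lsum (fun j => F j t) l) x (lsum dF l).
Proof. induction l; intros H. exact (dpl_const 0 x).
 apply dpl_plus. apply H; left; auto. apply IHl; intros; apply H; right; auto. Qed.

Definition dlt (n k j : nat) : R := (if j =? k then 1 else 0) - (if (n + j) =? k then 1 else 0).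

Lemma vv_shift n w k j t : vv n (shift w k t) j = vv n w j + dlt n k j * t.
Proof. unfold vv, shift, dlt. destruct (j =? k), (n + j =? k); ring. Qed.

Lemma shift0 w k : shift w k 0 = w.
Proof. apply functional_extensionality; intros m; unfold shift; destruct (m =? k); ring. Qed.

Definition E0 n w (z : nat -> R) := exp (- lsum (fun j => vv n w j * z n * z j) (idx (n - 1)) - vv n w n * z n).

Lemma dpl_integrand n w k (z : nat -> R) :
  derivable_pt_lim (fun t => exp (- lsum (fun j => vv n (shift w k t) j * z n * z j) (idx (n - 1)) - vv n (shift w k t) n * z n)) 0
   ((- lsum (fun j => dlt n k j * z n * z j) (idx (n - 1)) - dlt n k n * z n) * E0 n w z).
Proof. unfold E0. eapply dpl_eq. 2:{ apply dpl_exp. apply dpl_minus. apply dpl_opp.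
 apply (dpl_lsum (fun j t => vv n (shift w k t) j * z n * z j)).
 intros j _. apply dpl_mulr, dpl_mulr. eapply dpl_ext; [intros t; symmetry; apply vv_shift| apply dpl_affine].
 apply dpl_mulr. eapply dpl_ext; [intros t; symmetry; apply vv_shift| apply dpl_affine]. }
 cbv beta. rewrite shift0. reflexivity. Qed.


Lemma lprod_pick' (i : nat) (b : nat -> R) l : NoDup l -> In i l ->
  lprod b l = b i * lprod (fun j => if j =? i then 1 else b j) l.
Proof. intros Hd Hi. rewrite <- lprod_pick; auto. apply lprod_ext_in; intros j _; destruct (j =? i); auto. Qed.

Lemma bits_in m c : In c (bits (S m)) -> c (S m) = 1 \/ c (S m) = 0.
Proof. intros H. pose proof (all_vecs_in _ _ _ H (S m)) as H'. cbn [In] in H'. destruct H' as [H'|[H'|[]]]; [lia|auto|auto]. Qed.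

Lemma Q_i m p w (z : nat -> R) i : (forall j, (1 <= j <= S m)%nat -> p j < 1) -> (1 <= i <= m)%nat ->
 lsum (fun c => mask_pr (S m) p c * g_under (S m) p w (fun j => c j * z j) i) (bits (S m)) =
 (1 - p (S m)) * (- (exp (- vv (S m) w (S m) * z (S m)) * z (S m) / (1 - p (S m)))) *
   (z i * lprod (fun j => exp (- vv (S m) w j * z (S m) * z j)) (seq 1 m)).
Proof. intros Hp Hi.
 set (K0 := - (exp (- vv (S m) w (S m) * z (S m)) * z (S m) / (1 - p (S m)))).
 unfold bits.
 rewrite (factor_P _ (fun j a => if j =? S m then (if Req_EM_T a 1 then 1 - p j else p j) * (a * K0)
   else (if Req_EM_T a 1 then 1 - p j else p j) *
     (if j =? i then exp (- vv (S m) w j * z (S m) * (a * z j)) * (a * z j) / (1 - p j)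
      else (exp (- vv (S m) w j * z (S m) * (a * z j)) - p j) / (1 - p j)))).
 - rewrite seq_last, lprod_app, lprod_single. rewrite Nat.eqb_refl.
   rewrite !lsum_cons, lsum_nil, Req1, Req0.
   rewrite (lprod_ext_in _ (fun j => if j =? i then z j * exp (- vv (S m) w j * z (S m) * z j)
        else exp (- vv (S m) w j * z (S m) * z j))).
   + rewrite lprod_pick by (apply seq_NoDup || (apply in_seq; lia)).
     rewrite (lprod_pick' i (fun j => exp (- vv (S m) w j * z (S m) * z j))) by (apply seq_NoDup || (apply in_seq; lia)). ring.
   + intros j Hj. apply in_seq in Hj.
     assert (Hj1 : (j =? S m) = false) by (apply Nat.eqb_neq; lia). rewrite Hj1.
     rewrite !lsum_cons, lsum_nil, Req1, Req0.
     assert (Hpj : 1 - p j <> 0) by (assert (p j < 1) by (apply Hp; lia); lra).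
     replace (- vv (S m) w j * z (S m) * (0 * z j)) with 0 by ring. rewrite exp_0.
     replace (1 * z j) with (z j) by ring.
     destruct (j =? i); field; auto.
 - intros c Hc. assert (Hin := bits_in m c Hc).
   unfold mask_pr, g_under, idx.
   assert (Hi1 : (i =? S m) = false) by (apply Nat.eqb_neq; lia). rewrite Hi1.
   replace (S m - 1)%nat with m by lia. cbv beta.
   destruct Hin as [H1|H0].
   + rewrite !seq_last, !lprod_app, !lprod_single, H1. rewrite Nat.eqb_refl, Req1.
     rewrite (lprod_if_notin (S m)) by (intros j Hj; apply in_seq in Hj; lia).
     rewrite lprod_mult. rewrite (lprod_pick i (fun x => exp (- vv (S m) w x * z (S m) * (c x * z x)) * (c x * z x) / (1 - p x))) by (apply seq_NoDup || (apply in_seq; lia)).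
     replace (1 * z (S m)) with (z (S m)) by ring. unfold K0. ring.
   + rewrite !seq_last, !lprod_app, !lprod_single, H0. rewrite Nat.eqb_refl. unfold K0, Rdiv. ring.
Qed.

Lemma Q_n m p w (z : nat -> R) : (forall j, (1 <= j <= S m)%nat -> p j < 1) ->
 lsum (fun c => mask_pr (S m) p c * g_under (S m) p w (fun j => c j * z j) (S m)) (bits (S m)) =
 (1 - p (S m)) * (- (exp (- vv (S m) w (S m) * z (S m)) * z (S m) / (1 - p (S m)))) *
   (lprod (fun j => exp (- vv (S m) w j * z (S m) * z j)) (seq 1 m)).
Proof. intros Hp.
 set (K0 := - (exp (- vv (S m) w (S m) * z (S m)) * z (S m) / (1 - p (S m)))).
 unfold bits.
 rewrite (factor_P _ (fun j a => if j =? S m then (if Req_EM_T a 1 then 1 - p j else p j) * (a * K0)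
   else (if Req_EM_T a 1 then 1 - p j else p j) *
      ((exp (- vv (S m) w j * z (S m) * (a * z j)) - p j) / (1 - p j)))).
 - rewrite seq_last, lprod_app, lprod_single. rewrite Nat.eqb_refl.
   rewrite !lsum_cons, lsum_nil, Req1, Req0.
   rewrite (lprod_ext_in _ (fun j => exp (- vv (S m) w j * z (S m) * z j))).
   + ring.
   + intros j Hj. apply in_seq in Hj.
     assert (Hj1 : (j =? S m) = false) by (apply Nat.eqb_neq; lia). rewrite Hj1.
     rewrite !lsum_cons, lsum_nil, Req1, Req0.
     assert (Hpj : 1 - p j <> 0) by (assert (p j < 1) by (apply Hp; lia); lra).
     replace (- vv (S m) w j * z (S m) * (0 * z j)) with 0 by ring. rewrite exp_0.
     replace (1 * z j) with (z j) by ring. field; auto.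
 - intros c Hc. assert (Hin := bits_in m c Hc).
   unfold mask_pr, g_under, idx. rewrite Nat.eqb_refl.
   replace (S m - 1)%nat with m by lia. cbv beta.
   destruct Hin as [H1|H0].
   + rewrite !seq_last, !lprod_app, !lprod_single, H1. rewrite Nat.eqb_refl, Req1.
     rewrite (lprod_if_notin (S m)) by (intros j Hj; apply in_seq in Hj; lia).
     rewrite lprod_mult.
     replace (1 * z (S m)) with (z (S m)) by ring. unfold K0. ring.
   + rewrite !seq_last, !lprod_app, !lprod_single, H0. rewrite Nat.eqb_refl. unfold K0, Rdiv. ring.
Qed.


Lemma G_lo n p w X k : (1 <= k <= n)%nat -> G_under n p w X k = g_under n p w X k.
Proof. intros H. unfold G_under. replace (1 <=? k)%nat with true by (symmetry; apply Nat.leb_le; lia).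
 replace (k <=? n)%nat with true by (symmetry; apply Nat.leb_le; lia). reflexivity. Qed.
Lemma G_hi n p w X k : (n + 1 <= k <= 2 * n)%nat -> G_under n p w X k = - g_under n p w X (k - n).
Proof. intros H. unfold G_under. replace (1 <=? k)%nat with true by (symmetry; apply Nat.leb_le; lia).
 replace (k <=? n)%nat with false by (symmetry; apply Nat.leb_gt; lia).
 replace (n + 1 <=? k)%nat with true by (symmetry; apply Nat.leb_le; lia).
 replace (k <=? 2 * n)%nat with true by (symmetry; apply Nat.leb_le; lia). reflexivity. Qed.
Lemma G_top n p w X k : (k = 2 * n + 1)%nat -> G_under n p w X k = 0.
Proof. intros H. unfold G_under.
 replace (k <=? n)%nat with false by (symmetry; apply Nat.leb_gt; lia).
 replace (k <=? 2 * n)%nat with false by (symmetry; apply Nat.leb_gt; lia).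
 rewrite !Bool.andb_false_r. reflexivity. Qed.

Lemma E0_fact m w z : E0 (S m) w z =
  exp (- vv (S m) w (S m) * z (S m)) * lprod (fun j => exp (- vv (S m) w j * z (S m) * z j)) (seq 1 m).
Proof. unfold E0, idx. replace (S m - 1)%nat with m by lia.
 rewrite (lprod_exp (fun j => - vv (S m) w j * z (S m) * z j)), <- exp_plus. f_equal.
 rewrite (lsum_ext_in (fun j => - vv (S m) w j * z (S m) * z j) (fun j => -1 * (vv (S m) w j * z (S m) * z j)))
  by (intros; ring). rewrite lsum_scal. ring. Qed.

Lemma eqb_f a b : a <> b -> (a =? b) = false.
Proof. apply Nat.eqb_neq. Qed.

Lemma core m p w (z : nat -> R) k : (forall j, (1 <= j <= S m)%nat -> p j < 1) -> (1 <= k <= 2 * S m + 1)%nat ->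
 lsum (fun c => mask_pr (S m) p c * G_under (S m) p w (fun i => c i * z i) k) (bits (S m)) =
 (- lsum (fun j => dlt (S m) k j * z (S m) * z j) (idx (S m - 1)) - dlt (S m) k (S m) * z (S m)) * E0 (S m) w z.
Proof. intros Hp Hk. rewrite E0_fact. unfold idx. replace (S m - 1)%nat with m by lia.
 assert (Hpn : 1 - p (S m) <> 0) by (assert (p (S m) < 1) by (apply Hp; lia); lra).
 destruct (le_lt_dec k m) as [Hkm|Hkm].
 { rewrite (lsum_ext_in _ (fun c => mask_pr (S m) p c * g_under (S m) p w (fun i => c i * z i) k))
     by (intros; rewrite G_lo by lia; reflexivity).
   rewrite Q_i by (auto; lia).
   rewrite (lsum_ext_in _ (fun j => if j =? k then z (S m) * z j else 0)).
   2:{ intros j Hj; apply in_seq in Hj. unfold dlt. rewrite (eqb_f (S m + j)) by lia.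
       destruct (j =? k); ring. }
   rewrite lsum_pick by (apply seq_NoDup || (apply in_seq; lia)).
   unfold dlt. rewrite (eqb_f (S m)), (eqb_f (S m + S m)) by lia. field; auto. }
 destruct (Nat.eq_dec k (S m)) as [->|Hk2].
 { rewrite (lsum_ext_in _ (fun c => mask_pr (S m) p c * g_under (S m) p w (fun i => c i * z i) (S m)))
     by (intros; rewrite G_lo by lia; reflexivity).
   rewrite Q_n by auto.
   rewrite lsum_zero.
   2:{ intros j Hj; apply in_seq in Hj. unfold dlt. rewrite (eqb_f (S m + j)), (eqb_f j) by lia. ring. }
   unfold dlt. rewrite Nat.eqb_refl, (eqb_f (S m + S m)) by lia. field; auto. }
 destruct (le_lt_dec k (S m + m)) as [Hk3|Hk3].
 { rewrite (lsum_ext_in _ (fun c => -1 * (mask_pr (S m) p c * g_under (S m) p w (fun i => c i * z i) (k - S m))))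
     by (intros; rewrite G_hi by lia; ring).
   rewrite lsum_scal, Q_i by (auto; lia).
   rewrite (lsum_ext_in _ (fun j => if j =? (k - S m)%nat then - (z (S m) * z j) else 0)).
   2:{ intros j Hj; apply in_seq in Hj. unfold dlt. rewrite (eqb_f j k) by lia.
       destruct (Nat.eqb_spec j (k - S m)) as [E|E].
       - replace (S m + j =? k)%nat with true by (symmetry; apply Nat.eqb_eq; lia). ring.
       - rewrite (eqb_f (S m + j)) by lia. ring. }
   rewrite (lsum_pick (k - S m) (fun j => - (z (S m) * z j))) by (apply seq_NoDup || (apply in_seq; lia)).
   unfold dlt. rewrite (eqb_f (S m)), (eqb_f (S m + S m)) by lia. field; auto. }
 destruct (Nat.eq_dec k (S m + S m)) as [->|Hk4].
 { rewrite (lsum_ext_in _ (fun c => -1 * (mask_pr (S m) p c * g_under (S m) p w (fun i => c i * z i) (S m))))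
     by (intros; rewrite G_hi by lia; replace (S m + S m - S m)%nat with (S m) by lia; ring).
   rewrite lsum_scal, Q_n by auto.
   rewrite lsum_zero.
   2:{ intros j Hj; apply in_seq in Hj. unfold dlt. rewrite (eqb_f (S m + j)), (eqb_f j) by lia. ring. }
   unfold dlt. rewrite Nat.eqb_refl, (eqb_f (S m)) by lia. field; auto. }
 rewrite lsum_zero.
 2:{ intros c _. rewrite G_top by lia. ring. }
 rewrite lsum_zero.
 2:{ intros j Hj; apply in_seq in Hj. unfold dlt. rewrite (eqb_f (S m + j)), (eqb_f j) by lia. ring. }
 unfold dlt. rewrite (eqb_f (S m + S m)), (eqb_f (S m)) by lia. ring.
Qed.

Lemma part1 m A theta p w k : (forall j, (1 <= j <= S m)%nat -> p j < 1) -> (1 <= k <= 2 * S m + 1)%nat ->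
  derivable_pt_lim (fun t => Stilde (S m) A theta (shift w k t)) 0
       (miss_E (S m) A theta p (fun X => G_under (S m) p w X k)).
Proof. intros Hp Hk.
 replace (miss_E (S m) A theta p (fun X => G_under (S m) p w X k)) with
   (lsum (fun z => ising_pr (S m) A theta z *
      ((- lsum (fun j => dlt (S m) k j * z (S m) * z j) (idx (S m - 1)) - dlt (S m) k (S m) * z (S m)) * E0 (S m) w z)) (cube (S m))).
 - unfold Stilde, ising_E.
   apply (dpl_lsum (fun z t => ising_pr (S m) A theta z * exp (- lsum (fun j => vv (S m) (shift w k t) j * z (S m) * z j) (idx (S m - 1)) - vv (S m) (shift w k t) (S m) * z (S m)))).
   intros z _. apply dpl_mull. apply dpl_integrand.
 - unfold miss_E. apply lsum_ext_in; intros z _.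
   rewrite <- (core m p w z k) by auto. rewrite <- lsum_scal. apply lsum_ext_in; intros c _. ring.
Qed.


Lemma exp_le x y : x <= y -> exp x <= exp y.
Proof. intros H; destruct (Rle_lt_or_eq_dec _ _ H) as [H' | ->]; [left; apply exp_increasing; auto| right; auto]. Qed.

Lemma convex r x : 1 <= r -> 0 <= x -> 1 + r * (exp x - 1) <= exp (r * x).
Proof. intros Hr Hx. destruct (Rle_lt_or_eq_dec _ _ Hx) as [Hx' | <-].
 2:{ rewrite Rmult_0_r, exp_0. lra. }
 destruct (MVT_cor2 (fun t => exp (r * t) - r * exp t) (fun t => r * exp (r * t) - r * exp t) 0 x Hx') as [c [Hc1 Hc2]].
 - intros c _. apply dpl_minus.
   + apply (dpl_ext (fun t => exp (0 + r * t))); [intros; rewrite Rplus_0_l; reflexivity|].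
     eapply dpl_eq; [|apply (dpl_exp (fun t => 0 + r * t)), dpl_affine]. rewrite Rplus_0_l. ring.
   + apply dpl_mull. apply derivable_pt_lim_exp.
 - assert (exp c <= exp (r * c)) by (apply exp_le; nra).
   assert (0 <= r * exp (r * c) - r * exp c) by nra.
   rewrite Rmult_0_r, exp_0, Rmult_1_r in Hc1. nra. Qed.

Lemma B2 pj q x v : 0 <= pj < 1 -> / (1 - pj) <= q -> Rabs x <= Rabs v ->
  Rabs ((exp x - pj) / (1 - pj)) <= exp (q * Rabs v).
Proof. intros Hp Hq Hx. assert (Hr0 : 0 < 1 - pj) by lra. remember (/ (1 - pj)) as r eqn:Er.
 assert (Hr1 : 1 <= r). { rewrite Er, <- Rinv_1. apply Rinv_le_contravar; lra. }
 replace ((exp x - pj) / (1 - pj)) with (1 + r * (exp x - 1)) by (rewrite Er; field; lra).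
 assert (Hv0 := Rabs_pos v). assert (Hq0 : 0 <= q) by lra.
 assert (E1 := exp_ineq1_le (q * Rabs v)). assert (Hqv : 0 <= q * Rabs v) by nra.
 destruct (Rle_or_lt 0 x) as [H0|H0].
 - rewrite Rabs_right in Hx by lra.
   assert (exp 0 <= exp x) by (apply exp_le; lra). rewrite exp_0 in H.
   apply Rabs_le; split; [nra|].
   eapply Rle_trans; [apply convex; lra|]. apply exp_le. nra.
 - rewrite Rabs_left in Hx by lra.
   assert (exp x <= exp 0) by (apply exp_le; lra). rewrite exp_0 in H.
   assert (E2 := exp_ineq1_le x).
   apply Rabs_le; split; nra. Qed.

Lemma B1 pj q x v b : 0 <= pj < 1 -> / (1 - pj) <= q -> 1 <= q -> Rabs x <= Rabs v -> Rabs b <= 1 ->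
  Rabs (exp x * b / (1 - pj)) <= q * exp (q * Rabs v).
Proof. intros Hp Hq Hq1 Hx Hb. unfold Rdiv. rewrite !Rabs_mult.
 rewrite (Rabs_right (exp x)) by (left; apply exp_pos).
 rewrite (Rabs_right (/ (1 - pj))) by (left; apply Rinv_0_lt_compat; lra).
 assert (exp x <= exp (q * Rabs v)).
 { apply exp_le. assert (Hv0 := Rabs_pos v). assert (x <= Rabs x) by apply RRle_abs. nra. }
 assert (0 < exp x) by apply exp_pos. assert (0 < / (1 - pj)) by (apply Rinv_0_lt_compat; lra).
 assert (Hb0 := Rabs_pos b).
 apply Rle_trans with (exp (q * Rabs v) * 1 * q); [|lra].
 apply Rmult_le_compat; try nra. Qed.

Lemma abs3 v a b : Rabs a <= 1 -> Rabs b <= 1 -> Rabs (- v * a * b) <= Rabs v.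
Proof. intros Ha Hb. rewrite !Rabs_mult, Rabs_Ropp. assert (H0 := Rabs_pos a). assert (H1 := Rabs_pos b).
 assert (H2 := Rabs_pos v). assert (Rabs a * Rabs b <= 1) by nra. assert (Rabs v * (Rabs a * Rabs b) <= Rabs v * 1) by (apply Rmult_le_compat_l; lra). nra. Qed.
Lemma abs2 v a : Rabs a <= 1 -> Rabs (- v * a) <= Rabs v.
Proof. intros Ha. rewrite !Rabs_mult, Rabs_Ropp. assert (H0 := Rabs_pos a). assert (H2 := Rabs_pos v). nra. Qed.

Lemma pmax_props (p : nat -> R) l : (forall i, In i l -> 0 <= p i < 1) ->
  (0 <= fold_right Rmax 0 (map p l) < 1) /\ (forall i, In i l -> p i <= fold_right Rmax 0 (map p l)).
Proof. induction l; intros H. simpl; split; [lra| intros i []].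
 destruct IHl as [[I1 I2] I3]. intros; apply H; right; auto.
 assert (Ha := H a (or_introl eq_refl)). simpl. split; [split|].
 - eapply Rle_trans; [exact I1| apply Rmax_r].
 - apply Rmax_lub_lt; lra.
 - intros i [->|Hi]; [apply Rmax_l|]. eapply Rle_trans; [apply I3; auto| apply Rmax_r]. Qed.

Lemma bound_g m p w X i q : 1 <= q -> (forall j, (1 <= j <= S m)%nat -> 0 <= p j < 1) ->
  (forall j, (1 <= j <= S m)%nat -> / (1 - p j) <= q) ->
  (forall j, (1 <= j <= S m)%nat -> Rabs (X j) <= 1) -> (1 <= i <= S m)%nat ->
  Rabs (g_under (S m) p w X i) <= q ^ 2 * exp (q * lsum (fun j => Rabs (vv (S m) w j)) (seq 1 (S m))).
Proof. intros Hq Hp Hpq HX Hi.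
 set (e := fun j => exp (q * Rabs (vv (S m) w j))).
 assert (Hprod : lprod e (seq 1 m) = exp (q * lsum (fun j => Rabs (vv (S m) w j)) (seq 1 m))).
 { unfold e. rewrite (lprod_exp (fun j => q * Rabs (vv (S m) w j))), lsum_scal. reflexivity. }
 rewrite seq_last, lsum_app, lsum_single, Rmult_plus_distr_l, exp_plus, <- Hprod.
 assert (Hepos : 0 <= lprod e (seq 1 m)).
 { apply Rle_trans with (Rabs (lprod e (seq 1 m))); [apply Rabs_pos|].
   apply lprod_abs_le; intros; rewrite Rabs_right; [lra| left; unfold e; apply exp_pos]. }
 assert (HA : Rabs (- (exp (- vv (S m) w (S m) * X (S m)) * X (S m) / (1 - p (S m)))) <= q * e (S m)).
 { rewrite Rabs_Ropp. unfold e. apply B1; auto; try apply abs2; apply HX || apply Hp || apply Hpq; lia. }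
 assert (Hen : 0 < e (S m)) by (unfold e; apply exp_pos).
 unfold g_under. replace (S m - 1)%nat with m by lia.
 destruct (Nat.eq_dec i (S m)) as [-> | Hne].
 - rewrite Nat.eqb_refl, Rabs_mult.
   assert (HC : Rabs (lprod (fun j => (exp (- vv (S m) w j * X (S m) * X j) - p j) / (1 - p j)) (seq 1 m)) <= lprod e (seq 1 m)).
   { apply lprod_abs_le. intros j Hj; apply in_seq in Hj. unfold e. apply B2; [apply Hp; lia| apply Hpq; lia|].
     apply abs3; apply HX; lia. }
   apply Rle_trans with ((q * e (S m)) * lprod e (seq 1 m)).
   + apply Rmult_le_compat; auto using Rabs_pos.
   + assert (0 <= e (S m) * lprod e (seq 1 m)) by (apply Rmult_le_pos; lra).
     replace (q ^ 2 * (lprod e (seq 1 m) * exp (q * Rabs (vv (S m) w (S m))))) with (q * (q * (e (S m) * lprod e (seq 1 m)))) by (unfold e; ring).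
     apply Rle_trans with (q * (1 * (e (S m) * lprod e (seq 1 m)))); [right; ring|]. apply Rmult_le_compat_l; [lra|]. apply Rmult_le_compat_r; lra.
 - rewrite (eqb_f i (S m) Hne), !Rabs_mult.
   assert (HB : Rabs (exp (- vv (S m) w i * X (S m) * X i) * X i / (1 - p i)) <= q * e i).
   { unfold e. apply B1; auto; try apply abs3; apply HX || apply Hp || apply Hpq; lia. }
   assert (HC : Rabs (lprod (fun j => if j =? i then 1 else (exp (- vv (S m) w j * X (S m) * X j) - p j) / (1 - p j)) (seq 1 m))
      <= lprod (fun j => if j =? i then 1 else e j) (seq 1 m)).
   { apply lprod_abs_le. intros j Hj; apply in_seq in Hj. destruct (j =? i).
     - rewrite Rabs_R1; lra.
     - unfold e. apply B2; [apply Hp; lia| apply Hpq; lia|]. apply abs3; apply HX; lia. }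
   assert (Hpick : lprod e (seq 1 m) = e i * lprod (fun j => if j =? i then 1 else e j) (seq 1 m))
     by (apply lprod_pick'; [apply seq_NoDup| apply in_seq; lia]).
   assert (HP0 : 0 <= lprod (fun j => if j =? i then 1 else e j) (seq 1 m)) by (eapply Rle_trans; [apply Rabs_pos|exact HC]).
   apply Rle_trans with ((q * e (S m)) * (q * e i) * lprod (fun j => if j =? i then 1 else e j) (seq 1 m)).
   + apply Rmult_le_compat; auto using Rabs_pos.
     * apply Rmult_le_pos; apply Rabs_pos.
     * apply Rmult_le_compat; auto using Rabs_pos.
   + rewrite Hpick. right. unfold e; cbv beta; ring.
Qed.

Lemma lsum_shift (w : nat -> R) a len : forall s, lsum (fun j => w (a + j)%nat) (seq s len) = lsum w (seq (a + s) len).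
Proof. induction len; intros s; [reflexivity|]. simpl seq. rewrite !lsum_cons, IHlen.
 replace (a + S s)%nat with (S (a + s)) by lia. reflexivity. Qed.

Lemma part2 m p lam : (forall i, (1 <= i <= S m)%nat -> 0 <= p i < 1) ->
  forall (X w : nat -> R),
     (forall i, (1 <= i <= S m)%nat -> X i = -1 \/ X i = 0 \/ X i = 1) ->
     (forall k, (1 <= k <= 2 * S m + 1)%nat -> 0 <= w k) ->
     lsum w (seq 1 (2 * S m + 1)) = lam ->
     forall k, (1 <= k <= 2 * S m + 1)%nat ->
       Rabs (G_under (S m) p w X k)
         <= / (1 - pmax (S m) p) ^ 2 * exp (lam / (1 - pmax (S m) p)).
Proof. intros Hp X w HX Hw Hlam k Hk.
 destruct (pmax_props p (idx (S m))) as [[P0 P1] P2].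
 { intros i Hi; apply in_seq in Hi; apply Hp; lia. }
 fold (pmax (S m) p) in P0, P1, P2. set (P := pmax (S m) p) in *.
 set (q := / (1 - P)).
 assert (Hq1 : 1 <= q). { unfold q. rewrite <- Rinv_1. apply Rinv_le_contravar; lra. }
 assert (Hpq : forall j, (1 <= j <= S m)%nat -> / (1 - p j) <= q).
 { intros j Hj. unfold q. apply Rinv_le_contravar; [lra|]. assert (p j <= P) by (apply P2, in_seq; lia). lra. }
 assert (HX' : forall j, (1 <= j <= S m)%nat -> Rabs (X j) <= 1).
 { intros j Hj. apply Rabs_le. destruct (HX j Hj) as [E|[E|E]]; rewrite E; lra. }
 assert (Hsum : lsum (fun j => Rabs (vv (S m) w j)) (seq 1 (S m)) <= lam).
 { apply Rle_trans with (lsum (fun j => w j + w (S m + j)%nat) (seq 1 (S m))).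
   - apply lsum_le. intros j Hj; apply in_seq in Hj. unfold vv.
     assert (0 <= w j) by (apply Hw; lia). assert (0 <= w (S m + j)%nat) by (apply Hw; lia).
     apply Rabs_le; split; lra.
   - rewrite lsum_plus, lsum_shift, <- Hlam.
     replace (2 * S m + 1)%nat with (S m + (S m + 1))%nat by lia.
     rewrite seq_app, seq_app, !lsum_app.
     replace (S m + 1)%nat with (1 + S m)%nat by lia.
     assert (0 <= lsum w (seq (1 + S m + S m) 1)).
     { simpl seq. rewrite lsum_cons, lsum_nil. assert (0 <= w (S (S (m + S m)))) by (apply Hw; lia). lra. }
     lra. }
 assert (Hbound : forall i, (1 <= i <= S m)%nat -> Rabs (g_under (S m) p w X i) <= / (1 - P) ^ 2 * exp (lam / (1 - P))).
 { intros i Hi. eapply Rle_trans; [apply bound_g; eauto|].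
   rewrite <- pow_inv. fold q. unfold Rdiv. fold q.
   apply Rmult_le_compat_l; [apply pow_le; lra|]. apply exp_le. rewrite (Rmult_comm lam). apply Rmult_le_compat_l; lra. }
 destruct (le_lt_dec k (S m)) as [H1|H1].
 - rewrite G_lo by lia. apply Hbound; lia.
 - destruct (le_lt_dec k (2 * S m)) as [H2|H2].
   + rewrite G_hi by lia. rewrite Rabs_Ropp. apply Hbound; lia.
   + rewrite G_top by lia. rewrite Rabs_R0. apply Rmult_le_pos; [|left; apply exp_pos].
     left. apply Rinv_0_lt_compat, pow_lt; lra.
Qed.

Theorem mainTheorem10 (n : nat) (A : nat -> nat -> R) (theta : nat -> R)
  (lam : R) (p : nat -> R)
  (Hn : (2 <= n)%nat)
  (Hsym : forall i j, (1 <= i <= n)%nat -> (1 <= j <= n)%nat -> A i j = A j i)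
  (Hdiag : forall i, (1 <= i <= n)%nat -> A i i = 0)
  (Hlam : 0 < lam)
  (Hp : forall i, (1 <= i <= n)%nat -> 0 <= p i < 1) :
  (forall (w : nat -> R) (k : nat), (1 <= k <= 2 * n + 1)%nat ->
     derivable_pt_lim (fun t => Stilde n A theta (shift w k t)) 0
       (miss_E n A theta p (fun X => G_under n p w X k)))
  /\
  (forall (X w : nat -> R),
     (forall i, (1 <= i <= n)%nat -> X i = -1 \/ X i = 0 \/ X i = 1) ->
     (forall k, (1 <= k <= 2 * n + 1)%nat -> 0 <= w k) ->
     lsum w (seq 1 (2 * n + 1)) = lam ->
     forall k, (1 <= k <= 2 * n + 1)%nat ->
       Rabs (G_under n p w X k)
         <= / (1 - pmax n p) ^ 2 * exp (lam / (1 - pmax n p))).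
Proof.
  destruct n as [|m]; [lia|].
  split.
  - intros w k Hk. apply part1; auto. intros j Hj. apply Hp; auto.
  - apply part2; auto.
Qed.
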